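(* Let $s\in\{+1,-1\}$ and $N\ge1$. Let $f:H_N\to\mathbb R$ be nonzero with $\sum_{x\in H_N}f(x)\le0$ and $sf(\mathbf 1)\le0$. Then $$\#\{x\in H_N: f(x)<0\}\cdot\#\{S\subseteq[N]: s\widehat f(S)<0\}\ \ge\ 2^{N-4}.$$ In particular, if there are integers $r,k\ge1$ with $f(x)\ge0$ whenever $d_H(x,\mathbf 1)\ge r$ and $s\widehat f(S)\ge0$ whenever $\#S\ge k$, then $$\sum_{n=1}^{r}\binom{N}{n-1}\cdot\sum_{n=1}^{k}\binom{N}{n-1}\ \ge\ 2^{N-4}.$$
   Context: $H_N=\{-1,1\}^N$, $[N]=\{1,\dots,N\}$, $\mathbf 1=(1,\dots,1)$, and $d_H(x,y)=\#\{n\in[N]: x_n\neq y_n\}$ is the Hamming distance. For $S\subseteq[N]$, $\varphi_S(x)=\prod_{i\in S}x_i$ (with $\varphi_\emptyset\equiv1$), and $\widehat f(S)=2^{-N}\sum_{x\in H_N}f(x)\varphi_S(x)$, so that $f=\sum_S\widehat f(S)\varphi_S$. *)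

(* Defs.v *)
(* Real numbers are modelled by an arbitrary real closed field R. *)
From HB Require Import structures.
From mathcomp Require Import all_boot all_order all_algebra.
Set Implicit Arguments. Unset Strict Implicit. Unset Printing Implicit Defensive.
Import Order.TTheory GRing.Theory Num.Theory.
Local Open Scope ring_scope.

(* The hypercube H_N = {-1,1}^N, encoded as boolean vectors: x i = true means x_i = +1,
   x i = false means x_i = -1. *)
Definition cube (N : nat) := {ffun 'I_N -> bool}.

Definition sgnb (R : ringType) (b : bool) : R := if b then 1 else -1.

Definition ones (N : nat) : cube N := [ffun => true].

Definition dH (N : nat) (x y : cube N) : nat := #|[set i : 'I_N | x i != y i]|.

Definition walsh (R : ringType) (N : nat) (S : {set 'I_N}) (x : cube N) : R :=
  \prod_(i in S) sgnb R (x i).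

Definition fhat (R : fieldType) (N : nat) (f : cube N -> R) (S : {set 'I_N}) : R :=
  (2 ^+ N)^-1 * \sum_(x : cube N) f x * walsh R S x.

(* Main.v *)
Require Import Defs.
From HB Require Import structures.
From mathcomp Require Import all_boot all_order all_algebra.
From mathcomp Require Import ring lra.
Import Order.TTheory GRing.Theory Num.Theory.
Local Open Scope ring_scope.


Lemma walsh_norm (R : rcfType) (N : nat) (S : {set 'I_N}) (x : cube N) : `|walsh R S x| = 1.
Proof.
rewrite /walsh; apply: (big_ind (fun y : R => `|y| = 1)).
- by rewrite normr1.
- by move=> a b Ha Hb; rewrite normrM Ha Hb mulr1.
- by move=> i _; rewrite /sgnb; case: (x i); rewrite ?normrN normr1.
Qed.

Lemma walsh_ones (R : rcfType) (N : nat) (S : {set 'I_N}) : walsh R S (ones N) = 1.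
Proof. by rewrite /walsh big1 // => i _; rewrite /ones ffunE. Qed.

Lemma orth (R : rcfType) (N : nat) (x y : cube N) :
  \sum_(S : {set 'I_N}) walsh R S x * walsh R S y = if x == y then 2 ^+ N else 0.
Proof.
rewrite /walsh.
under eq_bigr => S _ do rewrite -big_split /=.
have -> : \sum_(S : {set 'I_N}) \prod_(i in S) (sgnb R (x i) * sgnb R (y i)) =
   \prod_(i : 'I_N) (sgnb R (x i) * sgnb R (y i) + 1).
  rewrite (bigA_distr 1 +%R (fun i => sgnb R (x i) * sgnb R (y i)) (fun _ => 1)).
  apply: eq_bigr => S _; rewrite [LHS]big_mkcond /=.
  by apply: eq_bigr => i _; case: (i \in S).
case: eqP => [<-|/eqP Hne].
  rewrite (eq_bigr (fun _ => 2)) ?prodr_const ?card_ord //.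
  by move=> i _; rewrite /sgnb; case: (x i); ring.
have [i Hi] : exists i, x i != y i.
  apply/existsP; apply: contraR Hne => /existsPn H.
  by apply/eqP/ffunP => i; apply/eqP; move: (H i); rewrite negbK.
rewrite (bigD1 i) //= /sgnb.
by case: (x i) (y i) Hi => -[] //= _; rewrite ?mulr1 ?mul1r ?mulrN1 addNr mul0r.
Qed.

Lemma inversion (R : rcfType) (N : nat) (f : cube N -> R) (y : cube N) :
  f y = \sum_(S : {set 'I_N}) fhat f S * walsh R S y.
Proof.
rewrite /fhat.
under eq_bigr => S _ do rewrite -mulrA big_distrl /=.
rewrite -big_distrr /= exchange_big /=.
under eq_bigr => x _ do (under eq_bigr => S _ do rewrite -mulrA; rewrite -big_distrr /= orth).
rewrite (bigD1 y) //= eqxx big1 ?addr0; last first.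
  by move=> x /negbTE ->; rewrite mulr0.
rewrite mulrC -mulrA mulfV ?mulr1 //.
by rewrite expf_neq0 // pnatr_eq0.
Qed.

Lemma half_bound (R : rcfType) (T : finType) (g : T -> R) (M : R) :
  \sum_x g x <= 0 -> (forall x, `|g x| <= M) ->
  \sum_x `|g x| <= 2 * (#|[set x | g x < 0]|%:R * M).
Proof.
rewrite (bigID (fun x => g x < 0)) /= => Hs HM.
rewrite (bigID (fun x => g x < 0)) /=.
have E1 : \sum_(x | ~~ (g x < 0)) `|g x| = \sum_(x | ~~ (g x < 0)) g x.
  by apply: eq_bigr => x; rewrite -leNgt => /ger0_norm.
have E2 : \sum_(x | g x < 0) `|g x| = - \sum_(x | g x < 0) g x.
  by rewrite -sumrN; apply: eq_bigr => x /ltr0_norm.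
have E3 : \sum_(x | g x < 0) `|g x| <= #|[set x | g x < 0]|%:R * M.
  rewrite (eq_bigl (fun x => x \in [set x | g x < 0])); last by move=> x; rewrite inE.
  apply: le_trans (ler_sum _ (fun x _ => HM x)) _.
  by rewrite sumr_const mulr_natl.
lra.
Qed.

Lemma card_small (N : nat) (r : nat) :
  #|[set S : {set 'I_N} | (#|S| < r)%N]| = (\sum_(1 <= n < r.+1) 'C(N, n.-1))%N.
Proof.
elim: r => [|r IH].
  rewrite big_geq //; apply/eqP; rewrite cards_eq0; apply/eqP/setP => S; by rewrite !inE.
rewrite big_nat_recr //= -IH.
have -> : [set S : {set 'I_N} | (#|S| < r.+1)%N] =
   [set S : {set 'I_N} | (#|S| < r)%N] :|: [set S : {set 'I_N} | #|S| == r].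
  by apply/setP => S; rewrite !inE ltnS leq_eqVlt orbC.
rewrite cardsU card_draws card_ord.
have -> : [set S : {set 'I_N} | (#|S| < r)%N] :&: [set S : {set 'I_N} | #|S| == r] = set0.
  apply/setP => S; rewrite !inE; case: eqP => [->|]; first by rewrite ltnn.
  by rewrite andbF.
by rewrite cards0 subn0.
Qed.

Lemma card_ball (N : nat) (r : nat) :
  (#|[set x : cube N | (dH x (ones N) < r)%N]| <= \sum_(1 <= n < r.+1) 'C(N, n.-1))%N.
Proof.
rewrite -card_small.
pose phi := fun x : cube N => [set i | ~~ x i].
have inj : injective phi.
  move=> x y /setP H; apply/ffunP => i; move: (H i); rewrite !inE.
  by case: (x i); case: (y i).
rewrite -(card_imset _ inj); apply: subset_leq_card; apply/subsetP => S /imsetP [x].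
rewrite !inE => Hx ->.
move: Hx; rewrite /dH.
suff -> : phi x = [set i | x i != ones N i] by [].
by apply/setP => i; rewrite !inE /ones ffunE; case: (x i).
Qed.


Theorem mainTheorem17 (R : rcfType) (N : nat) (s : R) (f : cube N -> R) :
  (s = 1 \/ s = -1) ->
  (1 <= N)%N ->
  (exists x : cube N, f x != 0) ->
  \sum_(x : cube N) f x <= 0 ->
  s * f (ones N) <= 0 ->
  ((#|[set x : cube N | f x < 0]|%:R * #|[set S : {set 'I_N} | s * fhat f S < 0]|%:R
     >= (2 : R) ^ (N%:Z - 4))
  /\
  (forall r k : nat, (1 <= r)%N -> (1 <= k)%N ->
     (forall x : cube N, (r <= dH x (ones N))%N -> 0 <= f x) ->
     (forall S : {set 'I_N}, (k <= #|S|)%N -> 0 <= s * fhat f S) ->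
     (\sum_(1 <= n < r.+1) 'C(N, n.-1))%:R * (\sum_(1 <= n < k.+1) 'C(N, n.-1))%:R
       >= (2 : R) ^ (N%:Z - 4))).
Proof.
move=> Hs HN [x0 Hx0] Hsum Hs1.
set A := [set x | f x < 0]; set B := [set S | s * fhat f S < 0].
set K := \sum_(S : {set 'I_N}) `|fhat f S|.
set L := \sum_(x : cube N) `|f x|.
set P : R := 2 ^+ N.
have HP : 0 < P by rewrite exprn_gt0.
have Hns : `|s| = 1 by case: Hs => ->; rewrite ?normrN normr1.
have HfK : forall x, `|f x| <= K.
  move=> x; rewrite (@inversion R N f x); apply: le_trans (ler_norm_sum _ _ _) _.
  by apply: ler_sum => S _; rewrite normrM walsh_norm mulr1.
have HfhL : forall S, `|fhat f S| <= P^-1 * L.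
  move=> S; rewrite /fhat normrM ger0_norm; last by rewrite invr_ge0 ltW.
  apply: ler_wpM2l; first by rewrite invr_ge0 ltW.
  apply: le_trans (ler_norm_sum _ _ _) _.
  by apply: ler_sum => x _; rewrite normrM walsh_norm mulr1.
have H1 : L <= 2 * (#|A|%:R * K) := @half_bound R _ _ _ Hsum HfK.
have H2 : K <= 2 * (#|B|%:R * (P^-1 * L)).
  have := @half_bound R _ (fun S => s * fhat f S) (P^-1 * L).
  have -> : \sum_S `|s * fhat f S| = K.
    by apply: eq_bigr => S _; rewrite normrM Hns mul1r.
  apply.
    rewrite -mulr_sumr; move: Hs1; rewrite (@inversion R N f (ones N)).
    by under eq_bigr => S _ do rewrite walsh_ones mulr1.
  by move=> S; rewrite normrM Hns mul1r.
have HK : 0 < K by apply: lt_le_trans (HfK x0); rewrite normr_gt0.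
have H3 : K * P <= 2 * #|B|%:R * L.
  have := ler_wpM2r (ltW HP) H2.
  suff -> : 2 * (#|B|%:R * (P^-1 * L)) * P = 2 * #|B|%:R * L by [].
  by field; rewrite gt_eqF.
have Hb : 0 <= #|B|%:R :> R by [].
have Ha : 0 <= #|A|%:R :> R by [].
have H4 : P <= 4 * (#|A|%:R * #|B|%:R).
  have H5 : 2 * #|B|%:R * L <= 2 * #|B|%:R * (2 * (#|A|%:R * K)).
    by apply: ler_wpM2l => //; rewrite mulr_ge0.
  have H6 : K * P <= K * (4 * (#|A|%:R * #|B|%:R)).
    apply: le_trans H3 _; apply: le_trans H5 _; rewrite le_eqVlt; apply/orP; left; apply/eqP; ring.
  by rewrite -(ler_pM2l HK).
have E : (2 : R) ^ (N%:Z - 4) * 2 ^+ 4 = P.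
  by rewrite -[(2:R)^+4]/((2:R)^(4%:Z)) -expfzDr ?subrK ?pnatr_eq0.
have Hmain : forall a b : R, #|A|%:R * #|B|%:R <= a * b -> (2 : R) ^ (N%:Z - 4) <= a * b.
  move=> a b Hab; set t := (2 : R) ^ (N%:Z - 4) in E *.
  have : 2 ^+ 4 = 16 :> R by rewrite !exprS expr0; ring.
  move=> E16; rewrite E16 in E.
  have : 0 <= #|A|%:R * #|B|%:R :> R by rewrite mulr_ge0.
  lra.
split; first exact: Hmain.
move=> r k Hr Hk Hf HS; apply: Hmain.
apply: ler_pM => //; rewrite ler_nat.
  apply: leq_trans (card_ball N r); apply: subset_leq_card; apply/subsetP => x.
  rewrite !inE => Hx; rewrite ltnNge; apply/negP => Hge.
  by move: (Hf x Hge); rewrite leNgt Hx.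
rewrite -card_small; apply: subset_leq_card; apply/subsetP => S.
rewrite !inE => HSn; rewrite ltnNge; apply/negP => Hge.
by move: (HS S Hge); rewrite leNgt HSn.
Qed.
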